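(* If the group $\mathrm{rot}(\mathcal G)=\{\mathrm{rot}(g):g\in\mathcal G\}$ is finite, then $U_{\mathrm{iso},0,0}\subset U_{\mathrm{per}}$.
   Context: Euclidean group: $\mathrm E(n)$ consists of pairs $(A|b)$, $A\in\mathrm O(n)$, $b\in\mathbb R^n$, acting by $(A|b)\cdot x=Ax+b$, product $(A_1|b_1)(A_2|b_2)=(A_1A_2|b_1+A_1b_2)$; $\mathrm{rot}(A|b)=A$. Standing setting: $d=d_1+d_2$; $\mathcal S<\mathrm E(d_2)$ is a space group with translation subgroup $\mathcal T_{\mathcal S}$; $A\oplus(B|b)=(\mathrm{diag}(A,B)|(0,b))$; $\mathcal G$ is a discrete subgroup of $\mathrm E(d)$ contained in $\{A\oplus s:A\in\mathrm O(d_1),s\in\mathcal S\}$ projecting onto $\mathcal S$; $\mathcal T\subset\mathcal G$ maps bijectively onto $\mathcal T_{\mathcal S}$ under the projection. There is $m_0\in\mathbb N$ such that $\mathcal T^N=\{t^N:t\in\mathcal T\}$ is a normal subgroup of $\mathcal G$ iff $N\in\mathcal M=m_0\mathbb N$. $U_{\mathrm{per}}$: maps $u:\mathcal G\to\mathbb R^d$ with $u(gt)=u(g)$ for all $g\in\mathcal G$, $t\in\mathcal T^N$, for some $N\in\mathcal M$. $x_0\in\mathbb R^d$ with $g\mapsto g\cdot x_0$ injective; $d_{\mathrm{aff}}=\dim\mathrm{aff}(\mathcal G\cdot x_0)$; assumed $\mathcal G\cdot x_0\subset\{0_{d-d_{\mathrm{aff}}}\}\times\mathbb R^{d_{\mathrm{aff}}}$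 and $\mathcal G$ acts trivially on $\mathbb R^{d-d_{\mathrm{aff}}}\times\{0\}$. $U_{\mathrm{iso},0,0}$ is the set of maps $u:\mathcal G\to\mathbb R^d$ for which there exist $a\in\mathbb R^d$ and $S\in\mathrm{Skew}(d_1)$ with $\mathrm{rot}(g)u(g)=a+(S\oplus0_{d_2\times d_2})(g\cdot x_0-x_0)$ for all $g\in\mathcal G$. *)

(* Defs.v *)
From HB Require Import structures.
From mathcomp Require Import all_boot all_order all_algebra.
From mathcomp Require Import classical_sets cardinality reals.
Set Implicit Arguments.
Unset Strict Implicit.
Unset Printing Implicit Defensive.
Import Order.TTheory GRing.Theory Num.Theory.
Local Open Scope ring_scope.
Local Open Scope classical_set_scope.

Section Euclid.
Variable R : realType.

Definition orthmx n (A : 'M[R]_n) : Prop := A *m A^T = 1%:M.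

(* An element (A|b) of E(n) is represented as the pair (A, b); *)
(* membership in E(n) additionally requires A to be orthogonal. *)
Definition euc n := ('M[R]_n * 'cV[R]_n)%type.

Definition euc_rot n (g : euc n) : 'M[R]_n := g.1.
Definition is_euc n (g : euc n) : Prop := orthmx g.1.

Definition act n (g : euc n) (x : 'cV[R]_n) : 'cV[R]_n := g.1 *m x + g.2.

Definition euc_id n : euc n := (1%:M, 0).
Definition euc_mul n (g h : euc n) : euc n := (g.1 *m h.1, g.2 + g.1 *m h.2).
(* inverse of (A|b) with A orthogonal: (A^T | - A^T b) *)
Definition euc_inv n (g : euc n) : euc n := (g.1^T, - (g.1^T *m g.2)).
Definition euc_pow n (g : euc n) (N : nat) : euc n := iter N (euc_mul g) (euc_id n).

Definition is_subgroup n (G : set (euc n)) : Prop :=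
  [/\ G `<=` @is_euc n, G (euc_id n),
      (forall g h, G g -> G h -> G (euc_mul g h)) &
      (forall g, G g -> G (euc_inv g))].

Definition is_discrete n (G : set (euc n)) : Prop :=
  exists2 eps : R, 0 < eps &
    forall g, G g ->
      (forall i j, `|g.1 i j - (1%:M : 'M[R]_n) i j| < eps) ->
      (forall i, `|g.2 i 0| < eps) -> g = euc_id n.

Definition transl_subgroup n (S : set (euc n)) : set (euc n) :=
  [set s | S s /\ s.1 = 1%:M].

Definition is_space_group n (S : set (euc n)) : Prop :=
  [/\ is_subgroup S, is_discrete S &
      exists2 B : 'M[R]_n, B \in unitmx &
        transl_subgroup S =
          [set s | exists k : 'cV[int]_n, s = (1%:M, B *m map_mx intr k)]].

Definition oplus d1 d2 (A : 'M[R]_d1) (s : euc d2) : euc (d1 + d2) :=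
  (block_mx A 0 0 s.1, col_mx 0 s.2).

Definition proj d1 d2 (g : euc (d1 + d2)) : euc d2 :=
  (drsubmx g.1, dsubmx g.2).

Definition is_normal_subgroup n (H G : set (euc n)) : Prop :=
  [/\ is_subgroup H, H `<=` G &
      forall g h, G g -> H h -> H (euc_mul (euc_mul g h) (euc_inv g))].

Definition powset n (T : set (euc n)) (N : nat) : set (euc n) :=
  [set euc_pow t N | t in T].

(* dim aff(G . x0) = k : the differences g.x0 - x0 (g in G) span a *)
(* k-dimensional space, i.e. k of them are linearly independent and *)
(* no k+1 of them are. *)
Definition diffs_mx n k (f : 'I_k -> euc n) (x0 : 'cV[R]_n) : 'M[R]_(k, n) :=
  \matrix_(i < k) (act (f i) x0 - x0)^T.

Definition aff_dim_orbit n (G : set (euc n)) (x0 : 'cV[R]_n) (k : nat) : Prop :=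
  (exists f : 'I_k -> euc n, (forall i, G (f i)) /\ row_free (diffs_mx f x0)) /\
  (forall f : 'I_k.+1 -> euc n, (forall i, G (f i)) -> ~~ row_free (diffs_mx f x0)).

Definition U_per n (G T : set (euc n)) (m0 : nat) (u : euc n -> 'cV[R]_n) : Prop :=
  exists N : nat, [/\ (0 < N)%N, (m0 %| N)%N &
    forall g t, G g -> powset T N t -> u (euc_mul g t) = u g].

Definition U_iso00 d1 d2 (G : set (euc (d1 + d2))) (x0 : 'cV[R]_(d1 + d2))
    (u : euc (d1 + d2) -> 'cV[R]_(d1 + d2)) : Prop :=
  exists (a : 'cV[R]_(d1 + d2)) (S : 'M[R]_d1), S^T = - S /\
    forall g, G g ->
      euc_rot g *m u g = a + block_mx S 0 0 (0 : 'M[R]_d2) *m (act g x0 - x0).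

End Euclid.

(* Main.v *)
Require Import Defs.
From HB Require Import structures.
From mathcomp Require Import all_boot all_order all_algebra.
From mathcomp Require Import classical_sets cardinality reals.
From mathcomp Require finmap.
Import Order.TTheory GRing.Theory Num.Theory.
Local Open Scope ring_scope.
Local Open Scope classical_set_scope.
Set Implicit Arguments.
Unset Strict Implicit.

Lemma pig (T : eqType) (f : nat -> T) (s : seq T) :
  (forall k, f k \in s) -> exists i j, (i < j <= size s)%N /\ f i = f j.
Proof.
move=> Hf.
have : ~~ uniq (map f (iota 0 (size s).+1)).
  apply/negP => Hu.
  have H := @uniq_leq_size _ _ s Hu.
  suff : (size s < size s)%N by rewrite ltnn.
  rewrite -[X in (X <= _)%N](size_iota 0) -(size_map f); apply: H.
  by move=> x /mapP [k _ ->].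
move/(uniqPn (f 0)) => [i [j [Hij]]].
rewrite size_map size_iota => Hj.
rewrite !(nth_map 0) ?size_iota ?(ltn_trans Hij) // !nth_iota ?(ltn_trans Hij) // !add0n => E.
by exists i, j; rewrite Hij -ltnS Hj.
Qed.

Section Aux.
Variable R : realType.
Variables d1 d2 : nat.
Local Notation n := (d1 + d2)%N.

Definition mpow (M : 'M[R]_n) k := iter k (mulmx M) 1%:M.

Lemma mpowD M a b : mpow M (a + b) = mpow M a *m mpow M b.
Proof.
rewrite /mpow iterD; elim: a => [|a IH] /=; first by rewrite mul1mx.
by rewrite IH mulmxA.
Qed.

Lemma mpowM M p q : mpow M p = 1%:M -> mpow M (p * q) = 1%:M.
Proof.
move=> Hp; elim: q => [|q IH]; first by rewrite muln0.
by rewrite mulnS mpowD Hp IH mul1mx.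
Qed.

Lemma rot_pow (g : euc R n) k : (euc_pow g k).1 = mpow g.1 k.
Proof. by elim: k => [|k IH] //=; rewrite -IH. Qed.

Definition blockf (g : euc R n) : Prop :=
  exists (X : 'M[R]_d1) (Y : 'M[R]_d2) (c : 'cV[R]_d2),
    g = (block_mx X 0 0 Y, col_mx 0 c).

Lemma blockf_pow g k : blockf g -> blockf (euc_pow g k).
Proof.
move=> [X [Y [c ->]]]; elim: k => [|k [X' [Y' [c' IH]]]] /=.
  exists 1%:M, 1%:M, 0; rewrite /euc_id -scalar_mx_block.
  by congr (_, _); apply/matrixP => i j; rewrite !mxE; case: splitP => ? ?; rewrite !mxE.
rewrite /euc_pow /= in IH *; rewrite IH /euc_mul /=.
exists (X *m X'), (Y *m Y'), (c + Y *m c').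
rewrite mulmx_block mul_block_col !mul0mx !mulmx0 !addr0 !add0r.
by rewrite add_col_mx addr0.
Qed.

Lemma mpow_inv M N i : M *m N = 1%:M -> mpow M i *m mpow N i = 1%:M.
Proof.
move=> HMN; elim: i => [|i IH]; first by rewrite /mpow /= mul1mx.
have -> : mpow N i.+1 = N *m mpow N i by [].
have -> : mpow M i.+1 = mpow M i *m M by rewrite -addn1 mpowD /mpow /= mulmx1.
by rewrite -mulmxA (mulmxA M) HMN mul1mx IH.
Qed.

End Aux.

Theorem lemma3p26 (R : realType) (d1 d2 : nat)
  (S : set (euc R d2)) (G T : set (euc R (d1 + d2))) (m0 : nat)
  (x0 : 'cV[R]_(d1 + d2)) (daff : nat)
  (* standing setting *)
  (HS : is_space_group S)
  (HGsub : is_subgroup G) (HGdisc : is_discrete G)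
  (HGform : forall g, G g ->
     exists A : 'M[R]_d1, exists s : euc R d2, [/\ orthmx A, S s & g = oplus A s])
  (HGonto : forall s, S s -> exists2 g, G g & proj g = s)
  (HTsub : T `<=` G)
  (HTinj : forall t t', T t -> T t' -> proj t = proj t' -> t = t')
  (HTimg : (@proj R d1 d2) @` T = transl_subgroup S)
  (Hm0 : (0 < m0)%N)
  (HM : forall N : nat, (0 < N)%N -> (is_normal_subgroup (powset T N) G <-> (m0 %| N)%N))
  (Hx0 : forall g h, G g -> G h -> act g x0 = act h x0 -> g = h)
  (Hdaff : aff_dim_orbit G x0 daff)
  (Horb : forall g, G g -> forall i : 'I_(d1 + d2),
     (i < d1 + d2 - daff)%N -> act g x0 i 0 = 0)
  (Htriv : forall g, G g -> forall x : 'cV[R]_(d1 + d2),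
     (forall i : 'I_(d1 + d2), (d1 + d2 - daff <= i)%N -> x i 0 = 0) ->
     euc_rot g *m x = x)
  (* hypothesis of the lemma *)
  (Hfin : finite_set ((@euc_rot R (d1 + d2)) @` G)) :
  forall u : euc R (d1 + d2) -> 'cV[R]_(d1 + d2),
    U_iso00 G x0 u -> U_per G T m0 u.
Proof.
move=> u [a [Sk [_ Hu]]].
case: HGsub => Heuc Hid Hmul Hinv.
have Gpow : forall g k, G g -> G (euc_pow g k).
  move=> g k Hg; elim: k => [|k IH] //=.
  by apply: Hmul.
have Hbl : forall g, G g -> blockf g.
  move=> g Hg; have [A [s' [_ _ ->]]] := HGform g Hg.
  by exists A, s'.1, s'.2.
move/finite_fsetP: Hfin => [X HX].
pose sq := finmap.enum_fset X.
have Hone : forall g, G g -> mpow g.1 (size sq)`! = 1%:M.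
  move=> g Hg.
  have Hmem : forall k, mpow g.1 k \in sq.
    move=> k.
    have : ((@euc_rot R (d1 + d2)) @` G) (mpow g.1 k).
      by exists (euc_pow g k) ; [exact: Gpow | exact: rot_pow].
    by rewrite HX.
  have [i [j [/andP [Hij Hjs] E]]] := pig Hmem.
  have Hji : mpow g.1 (j - i) = 1%:M.
    have HMN := mpow_inv i (Heuc g Hg).
    by rewrite -[mpow g.1 (j - i)]mulmx1 -HMN mulmxA -mpowD subnK ?(ltnW Hij) // -E HMN.
  have /dvdnP [q ->] : (j - i %| (size sq)`!)%N.
    by apply: dvdn_fact; rewrite subn_gt0 Hij /= (leq_trans (leq_subr _ _) Hjs).
  by rewrite mulnC mpowM.
exists (m0 * (size sq)`!)%N; split.
- by rewrite muln_gt0 Hm0 fact_gt0.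
- by apply: dvdn_mulr.
move=> g _ Hg [s0 Ts0 <-].
have Gs0 := HTsub _ Ts0.
have Gt := Gpow s0 (m0 * (size sq)`!)%N Gs0.
have Hrot : (euc_pow s0 (m0 * (size sq)`!)).1 = 1%:M.
  by rewrite rot_pow mulnC mpowM // Hone.
have [Xt [Yt [ct Et]]] := blockf_pow (m0 * (size sq)`!)%N (Hbl _ Gs0).
have [Xg [Yg [cg Eg]]] := Hbl _ Hg.
move: Hrot Gt Et; set t := euc_pow _ _ => Hrot Gt Et.
have H1 := Hu _ (Hmul _ _ Hg Gt).
have H2 := Hu _ Hg.
have Hact : act (euc_mul g t) x0 - x0 = (act g x0 - x0) + g.1 *m t.2.
  rewrite /act /euc_mul /= Hrot mulmx1 addrA (addrAC (g.1 *m x0)) -!addrA; congr (_ + _); rewrite addrC -addrA; congr (_ + _); exact: addrC.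
have H0 : block_mx Sk 0 0 (0 : 'M[R]_d2) *m (g.1 *m t.2) = 0.
  rewrite Et Eg /= mul_block_col !mul0mx !mulmx0 !addr0 mul_block_col !mul0mx !mulmx0 !add0r.
  by rewrite col_mx0.
move: H1; set v := u (euc_mul g t).
rewrite Hact mulmxDr H0 addr0 -H2 /euc_rot /euc_mul /= Hrot mulmx1 => H1.
by rewrite -[v]mul1mx -(mulmx1C (Heuc g Hg)) -mulmxA H1 mulmxA (mulmx1C (Heuc g Hg)) mul1mx.
Qed.
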